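(* Define $A(n_1,n_2,n_3,n_4)$ for $n_1,\dots,n_4 \in \mathbb{Z}_{\geq 0}$ by $$\frac{1}{(1 - x_1 - x_2)(1 - x_3 - x_4) - x_1 x_2 x_3 x_4} = \sum_{n_1,n_2,n_3,n_4 \geq 0} A(n_1,n_2,n_3,n_4)\, x_1^{n_1}x_2^{n_2}x_3^{n_3}x_4^{n_4}.$$ Then for all $n_1,\dots,n_4 \geq 0$, $$A(n_1,n_2,n_3,n_4) = \sum_{k \in \mathbb{Z}} \binom{n_1}{k}\binom{n_3}{k}\binom{n_1+n_2-k}{n_1}\binom{n_3+n_4-k}{n_3},$$ and moreover $A(n_1,n_2,n_3,n_4)$ is the constant term of the Laurent polynomial $$\frac{(x_1+x_2+x_3)^{n_1}(x_1+x_2)^{n_2}(x_3+x_4)^{n_3}(x_2+x_3+x_4)^{n_4}}{x_1^{n_1}x_2^{n_2}x_3^{n_3}x_4^{n_4}}.$$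
   Context: Binomial coefficients with integer entries are the usual ones; $\binom{n}{k}=0$ for $k<0$ or $k>n$ when $n \ge 0$. *)

(* Defs.v *)
From HB Require Import structures.
From mathcomp Require Import all_boot all_order all_algebra.
Set Implicit Arguments. Unset Strict Implicit. Unset Printing Implicit Defensive.
Import Order.TTheory GRing.Theory Num.Theory.
Local Open Scope ring_scope.

(* ser: coefficient of x1^a x2^b x3^c x4^d is  f a b c d *)
Definition ser := nat -> nat -> nat -> nat -> int.

Definition sadd (f g : ser) : ser := fun a b c d => f a b c d + g a b c d.
Definition sopp (f : ser) : ser := fun a b c d => - f a b c d.
Definition ssub (f g : ser) : ser := sadd f (sopp g).

Definition smul (f g : ser) : ser := fun a b c d =>
  \sum_(i < a.+1) \sum_(j < b.+1) \sum_(k < c.+1) \sum_(l < d.+1)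
     f i j k l * g (a - i)%N (b - j)%N (c - k)%N (d - l)%N.

Definition smono (e1 e2 e3 e4 : nat) : ser := fun a b c d =>
  ([&& a == e1, b == e2, c == e3 & d == e4] : bool)%:R.

Definition sone : ser := smono 0 0 0 0.
Definition X1 : ser := smono 1 0 0 0.
Definition X2 : ser := smono 0 1 0 0.
Definition X3 : ser := smono 0 0 1 0.
Definition X4 : ser := smono 0 0 0 1.

Definition spow (f : ser) (n : nat) : ser := iter n (smul f) sone.

Definition Dser : ser :=
  ssub (smul (ssub sone (sadd X1 X2)) (ssub sone (sadd X3 X4)))
       (smul (smul X1 X2) (smul X3 X4)).

Definition Lnum (n1 n2 n3 n4 : nat) : ser :=
  smul (smul (spow (sadd (sadd X1 X2) X3) n1) (spow (sadd X1 X2) n2))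
       (smul (spow (sadd X3 X4) n3) (spow (sadd (sadd X2 X3) X4) n4)).

(* constant term of  P / (x1^n1 x2^n2 x3^n3 x4^n4)  for a polynomial P *)
Definition ct_div (P : ser) (n1 n2 n3 n4 : nat) : int := P n1 n2 n3 n4.

(* Main.v *)
Require Import Defs.
From HB Require Import structures.
From mathcomp Require Import all_boot all_order all_algebra.
From mathcomp Require Import zify ring lra.
From Stdlib Require Import FunctionalExtensionality.
Import Order.TTheory GRing.Theory Num.Theory.
Local Open Scope ring_scope.

Lemma serE (f g : ser) : (forall a b c d, f a b c d = g a b c d) -> f = g.
Proof.
move=> H; do 4 (apply: functional_extensionality => ?); exact: H.
Qed.

Notation P4 := {poly {poly {poly {poly int}}}}.
Definition toSer : P4 -> ser := locked (fun (p : P4) a b c d => p`_a`_b`_c`_d).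
Lemma toSerE p a b c d : toSer p a b c d = p`_a`_b`_c`_d.
Proof. by rewrite /toSer -lock. Qed.

Lemma toSerM p q : smul (toSer p) (toSer q) = toSer (p * q).
Proof.
apply: serE => a b c d; rewrite /toSer -lock /smul coefM !coef_sum.
apply: eq_bigr => i _; rewrite coefM !coef_sum.
apply: eq_bigr => j _; rewrite coefM !coef_sum.
apply: eq_bigr => k _; rewrite coefM.
by [].
Qed.

Lemma toSerD p q : sadd (toSer p) (toSer q) = toSer (p + q).
Proof. by apply: serE => a b c d; rewrite /sadd !toSerE !coefD. Qed.

Lemma toSerB p q : ssub (toSer p) (toSer q) = toSer (p - q).
Proof. by apply: serE => a b c d; rewrite /ssub /sadd /sopp !toSerE !coefB. Qed.

Definition x1 : P4 := locked 'X.
Definition x2 : P4 := locked ('X)%:P.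
Definition x3 : P4 := locked ('X)%:P%:P.
Definition x4 : P4 := locked ('X)%:P%:P%:P.
Lemma x1E : x1 = 'X. Proof. by rewrite /x1 -lock. Qed.
Lemma x2E : x2 = ('X)%:P. Proof. by rewrite /x2 -lock. Qed.
Lemma x3E : x3 = ('X)%:P%:P. Proof. by rewrite /x3 -lock. Qed.
Lemma x4E : x4 = ('X)%:P%:P%:P. Proof. by rewrite /x4 -lock. Qed.
Definition mono4 a b c d : P4 := locked (x1 ^+ a * x2 ^+ b * x3 ^+ c * x4 ^+ d).

Lemma coefMb (R : nzRingType) (p : {poly R}) (b : bool) j :
  (p * b%:R)`_j = if b then p`_j else 0.
Proof. by case: b; rewrite ?mulr1 ?mulr0 ?coef0. Qed.

Lemma coefbM (R : nzRingType) (p : {poly R}) (b : bool) j :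
  (b%:R * p)`_j = if b then p`_j else 0.
Proof. by case: b; rewrite ?mul1r ?mul0r ?coef0. Qed.

Lemma mono4E a b c d :
  mono4 a b c d = 'X^a * ('X^b * ('X^c * ('X^d)%:P)%:P)%:P.
Proof.
rewrite /mono4 -lock x1E x2E x3E x4E !(rmorphXn, rmorphM) /=.
by rewrite !mulrA.
Qed.

Lemma coef_mono4 a b c d i j k l :
  (mono4 a b c d)`_i`_j`_k`_l = ([&& i == a, j == b, k == c & l == d])%:R.
Proof.
rewrite mono4E coefMC coefXn coefbM; case: (i == a); last by rewrite ?coef0.
rewrite coefMC coefXn coefbM; case: (j == b); last by rewrite ?coef0.
rewrite coefMC coefXn coefbM; case: (k == c); last by rewrite ?coef0.
by rewrite coefXn.
Qed.

Lemma toSer_mono a b c d : smono a b c d = toSer (mono4 a b c d).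
Proof. by apply: serE => i j k l; rewrite toSerE coef_mono4. Qed.

Lemma toSer1 : sone = toSer 1.
Proof.
rewrite /sone toSer_mono; congr toSer.
by rewrite /mono4 -lock !expr0 !mulr1.
Qed.

Lemma toSerX1 : X1 = toSer x1.
Proof. by rewrite /X1 toSer_mono /mono4 -lock !expr0 expr1 !mulr1. Qed.
Lemma toSerX2 : X2 = toSer x2.
Proof. by rewrite /X2 toSer_mono /mono4 -lock !expr0 expr1 mul1r !mulr1. Qed.
Lemma toSerX3 : X3 = toSer x3.
Proof. by rewrite /X3 toSer_mono /mono4 -lock !expr0 expr1 !mul1r mulr1. Qed.
Lemma toSerX4 : X4 = toSer x4.
Proof. by rewrite /X4 toSer_mono /mono4 -lock !expr0 expr1 !mul1r. Qed.

Lemma toSerX p n : spow (toSer p) n = toSer (p ^+ n).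
Proof.
elim: n => [|n IH]; first by rewrite expr0 -toSer1.
by rewrite /spow iterS -/(spow _ n) IH toSerM exprS.
Qed.

Definition pA n : P4 := locked ((x1 + x2 + x3) ^+ n).
Definition pB n : P4 := locked ((x1 + x2) ^+ n).
Definition pC n : P4 := locked ((x3 + x4) ^+ n).
Definition pD n : P4 := locked ((x2 + x3 + x4) ^+ n).
Definition Lp n1 n2 n3 n4 : P4 := (pA n1 * pB n2) * (pC n3 * pD n4).

Lemma LnumE n1 n2 n3 n4 : Lnum n1 n2 n3 n4 = toSer (Lp n1 n2 n3 n4).
Proof.
have e12 : sadd X1 X2 = toSer (x1 + x2).
  rewrite toSerX1 toSerX2 toSerD; reflexivity.
have e34 : sadd X3 X4 = toSer (x3 + x4).
  rewrite toSerX3 toSerX4 toSerD; reflexivity.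
have eA : spow (sadd (sadd X1 X2) X3) n1 = toSer (pA n1).
  rewrite /pA -lock e12 toSerX3 toSerD toSerX; reflexivity.
have eB : spow (sadd X1 X2) n2 = toSer (pB n2).
  rewrite /pB -lock e12 toSerX; reflexivity.
have eC : spow (sadd X3 X4) n3 = toSer (pC n3).
  rewrite /pC -lock e34 toSerX; reflexivity.
have eD : spow (sadd (sadd X2 X3) X4) n4 = toSer (pD n4).
  rewrite /pD -lock toSerX2 toSerX3 toSerX4 toSerD toSerD toSerX; reflexivity.
rewrite /Lnum eA eB eC eD /Lp.
rewrite (toSerM (pA n1)) (toSerM (pC n3)) toSerM; reflexivity.
Qed.

Definition Dp : P4 := (1 - (x1 + x2)) * (1 - (x3 + x4)) - (x1 * x2) * (x3 * x4).

Lemma DserE : Dser = toSer Dp.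
Proof.
by rewrite /Dser toSerX1 toSerX2 toSerX3 toSerX4 toSer1 !(toSerD, toSerB, toSerM).
Qed.

Lemma smul_addl f g h : smul (sadd f g) h = sadd (smul f h) (smul g h).
Proof.
apply: serE => a b c d; rewrite /smul /sadd -big_split; apply: eq_bigr => i _.
rewrite -big_split; apply: eq_bigr => j _.
rewrite -big_split; apply: eq_bigr => k _.
rewrite -big_split; apply: eq_bigr => l _.
by rewrite mulrDl.
Qed.

Lemma smul_oppl f h : smul (sopp f) h = sopp (smul f h).
Proof.
apply: serE => a b c d; rewrite /smul /sopp -sumrN; apply: eq_bigr => i _.
rewrite -sumrN; apply: eq_bigr => j _.
rewrite -sumrN; apply: eq_bigr => k _.
rewrite -sumrN; apply: eq_bigr => l _.
by rewrite mulNr.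
Qed.

Lemma smul_subl f g h : smul (ssub f g) h = ssub (smul f h) (smul g h).
Proof. by rewrite /ssub smul_addl smul_oppl. Qed.

Lemma sum_ind n t (F : nat -> int) :
  \sum_(i < n) (i == t :> nat)%:R * F i = if (t < n)%N then F t else 0.
Proof.
case: ltnP => h.
  rewrite (bigD1 (Ordinal h)) //= eqxx mul1r big1 ?addr0 // => i ne.
  have -> : (i == t :> nat) = false.
    by apply/negbTE; apply: contra ne => /eqP e; apply/eqP/val_inj.
  by rewrite mul0r.
apply: big1 => i _.
have -> : (i == t :> nat) = false.
  by apply/negbTE; apply/eqP => e; move: (ltn_ord i); rewrite e ltnNge h.
by rewrite mul0r.
Qed.

Lemma sum_indn n t (F : nat -> int) :
  \sum_(0 <= i < n) (i == t)%:R * F i = if (t < n)%N then F t else 0.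
Proof. by rewrite big_mkord sum_ind. Qed.

Lemma smul_monol e1 e2 e3 e4 g a b c d :
  smul (smono e1 e2 e3 e4) g a b c d =
  if [&& e1 <= a, e2 <= b, e3 <= c & e4 <= d]%N
  then g (a - e1)%N (b - e2)%N (c - e3)%N (d - e4)%N else 0.
Proof.
rewrite /smul /smono.
transitivity (\sum_(0 <= i < a.+1) (i == e1)%:R *
  \sum_(0 <= j < b.+1) (j == e2)%:R * \sum_(0 <= k < c.+1) (k == e3)%:R *
  \sum_(0 <= l < d.+1) (l == e4)%:R * g (a - i)%N (b - j)%N (c - k)%N (d - l)%N).
  rewrite big_mkord; apply: eq_bigr => i _; rewrite !mulr_sumr big_mkord; apply: eq_bigr => j _.
  rewrite !mulr_sumr big_mkord; apply: eq_bigr => k _.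
  rewrite !mulr_sumr big_mkord; apply: eq_bigr => m _.
  by case: (i == e1 :> nat); case: (j == e2 :> nat); case: (k == e3 :> nat);
    case: (m == e4 :> nat); rewrite /= ?mul0r ?mul1r.
rewrite sum_indn ltnS; case: (e1 <= a)%N => //=.
rewrite sum_indn ltnS; case: (e2 <= b)%N => //=.
rewrite sum_indn ltnS; case: (e3 <= c)%N => //=.
by rewrite sum_indn ltnS.
Qed.

Lemma DpE : Dp = mono4 0 0 0 0 - mono4 1 0 0 0 - mono4 0 1 0 0 - mono4 0 0 1 0
  - mono4 0 0 0 1 + mono4 1 0 1 0 + mono4 1 0 0 1 + mono4 0 1 1 0 + mono4 0 1 0 1
  - mono4 1 1 1 1.
Proof. rewrite /Dp /mono4; unlock; ring. Qed.

Lemma Dser_mono : Dser = ssub (sadd (sadd (sadd (sadd (ssub (ssub (ssub (ssub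
  (smono 0 0 0 0) (smono 1 0 0 0)) (smono 0 1 0 0)) (smono 0 0 1 0)) (smono 0 0 0 1))
  (smono 1 0 1 0)) (smono 1 0 0 1)) (smono 0 1 1 0)) (smono 0 1 0 1)) (smono 1 1 1 1).
Proof. rewrite DserE DpE !toSer_mono. rewrite !(toSerD, toSerB). reflexivity. Qed.


Section NatPart.
Local Open Scope nat_scope.
Definition f (n m k : nat) : nat := 'C(n, k) * 'C(n + m - k, n).

Lemma binid n3 n4 k : k <= n3 -> k <= n4 ->
  'C(n4, k) * 'C(n4 - k + n3, n4) = 'C(n3, k) * 'C(n3 + n4 - k, n3).
Proof.
move=> h3 h4.
have e1 : n4 - k + n3 = n3 + n4 - k by lia.
rewrite e1; set T := n3 + n4 - k.
have p : 0 < k`! * (n4 - k)`! * (n3 - k)`! by rewrite !muln_gt0 !fact_gt0.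
apply/eqP; rewrite -(eqn_pmul2r p); apply/eqP.
have h1 := bin_fact h4. have h3' := bin_fact h3.
have hT4 : n4 <= T by lia. have hT3 : n3 <= T by lia.
have h2 := bin_fact hT4. have h4' := bin_fact hT3.
have e2 : T - n4 = n3 - k by lia.
have e3 : T - n3 = n4 - k by lia.
rewrite e2 in h2; rewrite e3 in h4'.
transitivity ('C(T, n4) * (('C(n4, k) * (k`! * (n4 - k)`!)) * (n3 - k)`!)); first by ring.
rewrite h1.
transitivity ('C(T, n3) * (('C(n3, k) * (k`! * (n3 - k)`!)) * (n4 - k)`!)); last by ring.
rewrite h3'.
by rewrite h2 h4'.
Qed.

Lemma sum_ind_nat J t (F : nat -> nat) :
  \sum_(0 <= j < J) (t == j) * F j = (t < J) * F t.
Proof.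
rewrite big_mkord; case: ltnP => h.
  rewrite (bigD1 (Ordinal h)) //= eqxx mul1n big1 ?addn0 ?mul1n // => i ne.
  have -> : (t == i) = false.
    by apply/negbTE; apply: contra ne => /eqP e; apply/eqP/val_inj.
  by rewrite mul0n.
rewrite mul0n; apply: big1 => i _.
have -> : (t == i) = false.
  by apply/negbTE; apply/eqP => e; move: (ltn_ord i); rewrite -e ltnNge h.
by rewrite mul0n.
Qed.

Lemma and4M (a b c d : bool) x : [&& a, b, c & d] * x = a * (d * ((b && c) * x)).
Proof. by case: a; case: b; case: c; case: d; rewrite ?mul0n ?mul1n. Qed.

Lemma inner n1 n2 n3 n4 k m :
  \sum_(0 <= j < (n1 - k + n2).+1) \sum_(0 <= l < (n4 - m + n3).+1)
    [&& n1 == j, n2 == n1 - k + n2 - j + m, n3 == k + (n4 - m + n3 - l) & n4 == l]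
    * ('C(n1, k) * 'C(n4, m) * 'C(n1 - k + n2, j) * 'C(n4 - m + n3, l))
  = (n2 == n1 - k + n2 - n1 + m) * ((n3 == k + (n4 - m + n3 - n4)) *
     ('C(n1, k) * 'C(n4, m) * 'C(n1 - k + n2, n1) * 'C(n4 - m + n3, n4))).
Proof.
under eq_bigr => j _ do under eq_bigr => l _ do rewrite and4M.
under eq_bigr => j _ do rewrite -big_distrr /=.
rewrite sum_ind_nat sum_ind_nat.
case: (ltnP n1 (n1 - k + n2).+1) => h1; last first.
  by rewrite mul0n (bin_small (n := n1 - k + n2)) ?muln0 //; lia.
case: (ltnP n4 (n4 - m + n3).+1) => h4; last first.
  by rewrite mul0n (bin_small (n := n4 - m + n3)) ?muln0 //; lia.
rewrite !mul1n.
by case: (n2 == _); case: (n3 == _); rewrite ?mul0n ?mul1n.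
Qed.

Lemma comb n1 n2 n3 n4 :
  \sum_(0 <= k < n1.+1) \sum_(0 <= m < n4.+1) \sum_(0 <= j < (n1 - k + n2).+1) \sum_(0 <= l < (n4 - m + n3).+1)
    [&& n1 == j, n2 == n1 - k + n2 - j + m, n3 == k + (n4 - m + n3 - l) & n4 == l]
    * ('C(n1, k) * 'C(n4, m) * 'C(n1 - k + n2, j) * 'C(n4 - m + n3, l))
  = \sum_(0 <= k < n1.+1) f n1 n2 k * f n3 n4 k.
Proof.
rewrite big_nat [RHS]big_nat; apply: eq_bigr => k /andP[_ hk].
rewrite ltnS in hk.
under eq_bigr => m _ do rewrite inner.
rewrite /f.
have -> : n1 + n2 - k = n1 - k + n2 by lia.
case: (leqP k n2) => h2; last first.
  rewrite (bin_small (n := n1 - k + n2)) ?muln0 ?mul0n; last by lia.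
  by apply: big1 => m _; rewrite muln0 !mul0n !muln0.
have E : forall m : nat, (n2 == n1 - k + n2 - n1 + m) = (k == m).
  by move=> m; apply/eqP/eqP; lia.
under eq_bigr => m _ do rewrite E.
rewrite sum_ind_nat.
case: (leqP k n4) => h4; last first.
  rewrite ltnS leqNgt h4 mul0n.
  case: (leqP k n3) => h3.
    by rewrite (bin_small (n := n3 + n4 - k)) ?muln0 //; lia.
  by rewrite (bin_small (n := n3)) ?muln0 ?mul0n.
rewrite ltnS h4 mul1n.
case: (leqP k n3) => h3; last first.
  have -> : (n3 == k + (n4 - k + n3 - n4)) = false by apply/negbTE/eqP; lia.
  by rewrite mul0n (bin_small (n := n3)) ?mul0n ?muln0.
have -> : (n3 == k + (n4 - k + n3 - n4)) = true by apply/eqP; lia.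
rewrite mul1n -(binid _ _ _ h3 h4); ring.
Qed.

End NatPart.

Lemma f_big n m k : (n < k)%N -> f n m k = 0%N.
Proof. by move=> h; rewrite /f bin_small. Qed.

Lemma f0m m k : f 0 m k = (k == 0%N).
Proof. by case: k => [|k]; rewrite /f ?bin0 ?subn0 //= bin0n muln1. Qed.

Lemma fn0 n k : f n 0 k = (k == 0%N).
Proof.
rewrite /f addn0; case: k => [|k]; first by rewrite subn0 binn bin0.
case: (ltnP n k.+1) => h; first by rewrite bin_small.
by rewrite (bin_small (n := n - k.+1)) ?muln0 //; lia.
Qed.

Lemma fS n m k : f n.+1 m.+1 k.+1 = (f n m.+1 k.+1 + f n.+1 m k.+1 + f n m k)%N.
Proof.
case: (ltnP n k) => h.
  by rewrite !f_big //; lia.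
rewrite /f.
have -> : (n.+1 + m.+1 - k.+1 = (n + m - k).+1)%N by lia.
have -> : (n + m.+1 - k.+1 = n + m - k)%N by lia.
have -> : (n.+1 + m - k.+1 = n + m - k)%N by lia.
rewrite !binS; ring.
Qed.

Lemma fS0 n m : f n.+1 m.+1 0 = (f n m.+1 0 + f n.+1 m 0)%N.
Proof.
rewrite /f !subn0 !bin0 !mul1n.
have -> : (n.+1 + m.+1 = (n + m.+1).+1)%N by lia.
have -> : (n.+1 + m = n + m.+1)%N by lia.
by rewrite binS addnC.
Qed.

Definition gd (n : nat) : int := if n is 0 then 0 else 1.

Lemma f_rec n m k :
  (f n m k)%:R - gd n * (f n.-1 m k)%:R - gd m * (f n m.-1 k)%:R =
  ((k == 0%N) && (n == 0%N) && (m == 0%N))%:R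
  + gd k * gd n * gd m * (f n.-1 m.-1 k.-1)%:R :> int.
Proof.
case: n => [|n].
  rewrite /= !f0m; case: m => [|m] /=; case: k => [|k] /=; ring.
case: m => [|m].
  rewrite /= !fn0; case: k => [|k] /=; ring.
case: k => [|k] /=.
  by rewrite fS0 natrD; ring.
by rewrite fS !natrD; ring.
Qed.

Definition R (A : ser) a b c d : int :=
  gd a * A a.-1 b c d + gd b * A a b.-1 c d + gd c * A a b c.-1 d
  + gd d * A a b c d.-1 - gd a * gd c * A a.-1 b c.-1 d - gd a * gd d * A a.-1 b c d.-1
  - gd b * gd c * A a b.-1 c.-1 d - gd b * gd d * A a b.-1 c d.-1
  + gd a * gd b * gd c * gd d * A a.-1 b.-1 c.-1 d.-1.

Definition rec (A : ser) a b c d : int := A a b c d - R A a b c d.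

Definition hk (k : nat) : ser := fun x y z w => (f x y k * f z w k)%:R.
Definition Bk (K : nat) : ser := fun x y z w => \sum_(k < K) hk k x y z w.
Definition Bz : ser := fun x y z w => Bk x.+1 x y z w.

Lemma Bk_ext K x y z w : (x < K)%N -> Bz x y z w = Bk K x y z w.
Proof.
move=> h; rewrite /Bz /Bk -(subnKC h) big_split_ord /=.
rewrite [X in _ = _ + X]big1 ?addr0 // => i _.
by rewrite /hk f_big ?mul0n //; lia.
Qed.

Lemma rec_sum K a b c d :
  rec (Bk K) a b c d = \sum_(k < K) rec (hk k) a b c d.
Proof.
rewrite /rec /R /Bk.
rewrite !(big_split, sumrN) /= -!mulr_sumr.
by [].
Qed.

Lemma natr_and (x y : bool) : ((x && y)%:R : int) = x%:R * y%:R.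
Proof. by case: x; case: y; rewrite ?mulr1 ?mulr0. Qed.

Lemma rec_hk k a b c d :
  rec (hk k) a b c d =
  (k == 0%N)%:R * ((a == 0%N) && (b == 0%N) && (c == 0%N) && (d == 0%N))%:R
  + gd a * gd b * gd c * gd d *
    (gd k * (f a.-1 b.-1 k.-1 * f c.-1 d.-1 k.-1)%:R - (f a.-1 b.-1 k * f c.-1 d.-1 k)%:R).
Proof.
have P1 := f_rec a b k; have P2 := f_rec c d k.
transitivity (((f a b k)%:R - gd a * (f a.-1 b k)%:R - gd b * (f a b.-1 k)%:R) *
  ((f c d k)%:R - gd c * (f c.-1 d k)%:R - gd d * (f c d.-1 k)%:R) -
  gd a * gd b * gd c * gd d * (f a.-1 b.-1 k * f c.-1 d.-1 k)%:R).
  rewrite /rec /R /hk !natrM; ring.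
rewrite P1 P2 !natr_and !natrM.
move: P1 P2 => _ _; case: k => [|k] /=; ring.
Qed.

Lemma rec_Bz a b c d : rec Bz a b c d = sone a b c d.
Proof.
transitivity (rec (Bk a.+1) a b c d).
  have E : forall x y z w, (x <= a)%N -> Bz x y z w = Bk a.+1 x y z w.
    by move=> x y z w h; apply: Bk_ext.
  by rewrite /rec /R !E ?leq_pred ?leqnn.
rewrite rec_sum.
under eq_bigr do rewrite rec_hk.
rewrite big_split /= -mulr_suml -mulr_sumr sumrB.
rewrite big_ord_recl /= big1 ?addr0; last by move=> i _.
rewrite mul1r big_ord_recl /= mul0r add0r big_ord_recr /=.
have -> : \sum_(i < a) gd (lift ord0 i) * (f a.-1 b.-1 (lift ord0 i).-1 * f c.-1 d.-1 (lift ord0 i).-1)%:R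
   = \sum_(i < a) (f a.-1 b.-1 i * f c.-1 d.-1 i)%:R.
  by apply: eq_bigr => i _; rewrite /= mul1r.
rewrite opprD addrA subrr add0r.
have -> : gd a * gd b * gd c * gd d * - (f a.-1 b.-1 a * f c.-1 d.-1 a)%:R = 0.
  case: a => [|a]; first by rewrite /= !mul0r.
  by rewrite /= f_big ?mul0n ?mulr0.
rewrite addr0 /sone /smono.
by case: (a == 0%N); case: (b == 0%N); case: (c == 0%N); case: (d == 0%N).
Qed.

Lemma R_ext (A B : ser) a b c d :
  (forall x y z w, (x + y + z + w < a + b + c + d)%N -> A x y z w = B x y z w) ->
  R A a b c d = R B a b c d.
Proof.
move=> Z; rewrite /R.
case: a Z => [|a] Z; case: b Z => [|b] Z; case: c Z => [|c] Z; case: d Z => [|d] Z;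
  rewrite /= ?mul0r ?mul1r; rewrite ?Z //; lia.
Qed.

Lemma uniqA (A : ser) :
  (forall a b c d, rec A a b c d = sone a b c d) ->
  forall a b c d, A a b c d = Bz a b c d.
Proof.
move=> HA.
suff H : forall s a b c d, (a + b + c + d < s)%N -> A a b c d = Bz a b c d.
  by move=> a b c d; apply: (H (a + b + c + d).+1).
elim=> [|s IH] a b c d hs; first by [].
have e1 := HA a b c d; have e2 := rec_Bz a b c d.
have eR : R A a b c d = R Bz a b c d.
  apply: R_ext => x y z w h; apply: IH; lia.
move: e1 e2; rewrite /rec eR => e1 e2.
by apply: (addIr (- R Bz a b c d)); rewrite e1 e2.
Qed.

Section Exp.
Variable R : comRingType.
Variables y1 y2 y3 y4 : R.


Lemma expand n1 n2 n3 n4 :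
  ((y1 + y2 + y3) ^+ n1 * (y1 + y2) ^+ n2) * ((y3 + y4) ^+ n3 * (y2 + y3 + y4) ^+ n4) =
  \sum_(0 <= k < n1.+1) \sum_(0 <= m < n4.+1) \sum_(0 <= j < (n1 - k + n2).+1)
    \sum_(0 <= l < (n4 - m + n3).+1)
    (y1 ^+ j * y2 ^+ (n1 - k + n2 - j + m) * y3 ^+ (k + (n4 - m + n3 - l)) * y4 ^+ l)
      *+ ('C(n1, k) * 'C(n4, m) * 'C(n1 - k + n2, j) * 'C(n4 - m + n3, l)).
Proof.
have -> : y2 + y3 + y4 = (y3 + y4) + y2 by ring.
rewrite (exprDn (y1 + y2)) (exprDn (y3 + y4) y2) mulr_suml mulr_sumr.
rewrite big_distrl /= big_mkord.
apply: eq_bigr => k _.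
rewrite big_distrr /= big_mkord; apply: eq_bigr => m _.
transitivity (((y1 + y2) ^+ (n1 - k + n2) * (y3 + y4) ^+ (n4 - m + n3)) * (y3 ^+ k * y2 ^+ m)
   *+ ('C(n1, k) * 'C(n4, m))).
  rewrite !exprD; ring.
rewrite (addrC y1 y2) exprDn (exprDn y3 y4) big_distrlr /= mulr_suml -sumrMnl.
rewrite big_mkord; apply: eq_bigr => j _; rewrite mulr_suml -sumrMnl big_mkord; apply: eq_bigr => l _.
rewrite !exprD; ring.
Qed.
End Exp.

Lemma DserA A a b c d : smul Dser A a b c d = rec A a b c d.
Proof.
rewrite Dser_mono !(smul_addl, smul_subl).
rewrite /ssub /sadd /sopp !smul_monol /rec /R !leq0n !subn0 !subn1 /=.
case: a => [|a]; case: b => [|b]; case: c => [|c]; case: d => [|d];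
  rewrite ?ltn0Sn ?ltnn /=; ring.
Qed.

Lemma coef4_sum (r : seq nat) (F : nat -> P4) a b c d :
  (\sum_(i <- r) F i)`_a`_b`_c`_d = \sum_(i <- r) (F i)`_a`_b`_c`_d.
Proof. by rewrite !coef_sum. Qed.

Lemma coef4_Mn (p : P4) n a b c d : (p *+ n)`_a`_b`_c`_d = p`_a`_b`_c`_d *+ n.
Proof. by rewrite !coefMn. Qed.

Lemma LpE n1 n2 n3 n4 : Lp n1 n2 n3 n4 =
  \sum_(0 <= k < n1.+1) \sum_(0 <= m < n4.+1) \sum_(0 <= j < (n1 - k + n2).+1)
    \sum_(0 <= l < (n4 - m + n3).+1)
    mono4 j (n1 - k + n2 - j + m) (k + (n4 - m + n3 - l)) l
      *+ ('C(n1, k) * 'C(n4, m) * 'C(n1 - k + n2, j) * 'C(n4 - m + n3, l)).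
Proof.
rewrite /Lp /pA /pB /pC /pD /mono4; unlock.
exact: expand.
Qed.

Lemma coefLp n1 n2 n3 n4 : (Lp n1 n2 n3 n4)`_n1`_n2`_n3`_n4 = Bz n1 n2 n3 n4.
Proof.
rewrite LpE coef4_sum.
under eq_bigr => k _ do rewrite coef4_sum.
transitivity ((\sum_(0 <= k < n1.+1) \sum_(0 <= m < n4.+1) \sum_(0 <= j < (n1 - k + n2).+1)
    \sum_(0 <= l < (n4 - m + n3).+1)
    [&& n1 == j, n2 == n1 - k + n2 - j + m, n3 == k + (n4 - m + n3 - l) & n4 == l]
    * ('C(n1, k) * 'C(n4, m) * 'C(n1 - k + n2, j) * 'C(n4 - m + n3, l)))%N%:R : int).
  rewrite natr_sum; apply: eq_bigr => k _.
  rewrite natr_sum; apply: eq_bigr => m _.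
  rewrite coef4_sum natr_sum; apply: eq_bigr => j _.
  rewrite coef4_sum natr_sum; apply: eq_bigr => l _.
  by rewrite coef4_Mn coef_mono4 natrM mulr_natr.
rewrite comb /Bz /Bk /hk natr_sum big_mkord.
by [].
Qed.

Theorem mainTheorem2 :
  (exists A : ser, smul Dser A = sone) /\
  forall A : ser, smul Dser A = sone ->
  forall n1 n2 n3 n4 : nat,
    A n1 n2 n3 n4 =
      (\sum_(k < n1.+1) 'C(n1, k) * 'C(n3, k) * 'C(n1 + n2 - k, n1)
                        * 'C(n3 + n4 - k, n3))%N%:Z
    /\ A n1 n2 n3 n4 = ct_div (Lnum n1 n2 n3 n4) n1 n2 n3 n4.
Proof.
split.
  exists Bz; apply: serE => a b c d; rewrite DserA; exact: rec_Bz.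
move=> A HA n1 n2 n3 n4.
have HA' : forall a b c d, rec A a b c d = sone a b c d.
  by move=> a b c d; rewrite -DserA HA.
have eAB := uniqA _ HA'.
split.
  rewrite eAB /Bz /Bk /hk -natz natr_sum; apply: eq_bigr => k _.
  by rewrite /f; congr (_%:R); ring.
by rewrite eAB /ct_div LnumE toSerE coefLp.
Qed.
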